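(* Let $q$ be a power of $2$ and $n\ge1$ an integer with $\gcd(n+1,q(q^2-1))=1$. Then $C_n(a)$ is LCD for every $a\in\mathbb{F}_q$.
   Context: For $a\in\mathbb{F}_q$ and $n \ge 1$, $T_n(a)$ denotes the $n\times n$ symmetric tridiagonal Toeplitz matrix over $\mathbb{F}_q$ with all diagonal entries equal to $a$, all entries on the first super- and sub-diagonals equal to $1$, and all other entries $0$. $C_n(a)$ is the $[2n,n]$ linear code over $\mathbb{F}_q$ with generator matrix $[I_n \mid T_n(a)]$. A linear code $C$ is LCD if $C\cap C^\perp=\{0\}$ (Euclidean dual). *)

(* Defs.v *)
From HB Require Import structures.
From mathcomp Require Import all_boot all_order all_algebra all_field.
Set Implicit Arguments. Unset Strict Implicit. Unset Printing Implicit Defensive.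
Import GRing.Theory.
Local Open Scope ring_scope.

Definition tridiag (F : fieldType) (n : nat) (a : F) : 'M[F]_n :=
  \matrix_(i < n, j < n)
    (if i == j then a
     else if ((i.+1 == j :> nat) || (j.+1 == i :> nat)) then 1 else 0).

Definition genC (F : fieldType) (n : nat) (a : F) : 'M[F]_(n, n + n) :=
  row_mx 1%:M (tridiag n a).

Definition in_code (F : fieldType) (k N : nat) (G : 'M[F]_(k, N)) (v : 'rV[F]_N) : Prop :=
  exists m : 'rV[F]_k, v = m *m G.

Definition edot (F : fieldType) (N : nat) (u v : 'rV[F]_N) : F :=
  \sum_(i < N) u 0 i * v 0 i.

Definition in_dual (F : fieldType) (k N : nat) (G : 'M[F]_(k, N)) (v : 'rV[F]_N) : Prop :=
  forall c, in_code G c -> edot v c = 0.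

Definition is_LCD (F : fieldType) (k N : nat) (G : 'M[F]_(k, N)) : Prop :=
  forall v : 'rV[F]_N, in_code G v -> in_dual G v -> v = 0.

(* Main.v *)
Require Import Defs.
From HB Require Import structures.
From mathcomp Require Import all_boot all_order all_algebra all_field all_fingroup all_solvable.
From mathcomp Require Import ring.
Set Implicit Arguments. Unset Strict Implicit. Unset Printing Implicit Defensive.
Import GRing.Theory.
Local Open Scope ring_scope.

Section S.
Variable F : finFieldType.
Hypothesis two0 : forall x : F, x + x = 0.

Lemma oppF (x : F) : - x = x.
Proof. by apply/eqP; rewrite eq_sym -subr_eq0 opprK two0. Qed.

Fixpoint P (b : F) (k : nat) : F :=
  match k with 0 => 0 | 1 => 1 | S ((S k') as k1) => P b k' + b * P b k1 end.

Lemma PSS b k : P b k.+2 = P b k + b * P b k.+1.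
Proof. by []. Qed.

Lemma cassini b k : P b k.+1 ^+ 2 + P b k * P b k.+2 = 1.
Proof.
elim: k => [|k IH]; first by rewrite /= mul0r addr0 expr1n.
rewrite !PSS in IH *.
rewrite -[RHS]IH.
have h : forall x y : F, x = y + x + y by move=> x y; rewrite addrC addrA two0 add0r.
rewrite [X in _ = X](h _ (b * P b k.+1 * P b k.+2)).
rewrite PSS; ring.
Qed.

Definition Q (x y z : F) : 'M[F]_2 :=
  \matrix_(i < 2, j < 2) if (i == 0) && (j == 0) then x
                         else if (i == 1) && (j == 1) then z else y.

Lemma QM b x y z : y * b + z = x -> Q x y z *m Q b 1 0 = Q (x * b + y) x y.
Proof.
move=> hx; apply/matrixP => i j; rewrite !mxE !big_ord_recl big_ord0 !mxE.
case: i => [[|[|i]] Hi] //; case: j => [[|[|j]] Hj] //=; rewrite ?mulr0 ?mulr1 ?addr0 ?add0r //.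
Qed.

Lemma Mpow b j : (Q b 1 0) ^+ j.+1 = Q (P b j.+2) (P b j.+1) (P b j).
Proof.
elim: j => [|j IH]; first by rewrite expr1 /= add0r mulr1.
rewrite exprSr IH [_ * _]QM; last by rewrite PSS; ring.
by rewrite !PSS; congr Q; ring.
Qed.

Lemma Q1 : Q 1 0 1 = 1.
Proof.
apply/matrixP => i j; rewrite !mxE.
by case: i => [[|[|i]] Hi] //; case: j => [[|[|j]] Hj].
Qed.

Lemma Qunit b : Q b 1 0 \is a GRing.unit.
Proof.
have [] := @mulmx1_unit _ _ (Q b 1 0) (Q 0 1 (- b)); last by [].
apply/matrixP => i j; rewrite !mxE !big_ord_recl big_ord0 !mxE.
case: i => [[|[|i]] Hi] //; case: j => [[|[|j]] Hj] //=; rewrite ?mulr0 ?mulr1 ?mul0r ?addr0 ?add0r ?mulrN ?mul1r ?subrr //.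
Qed.

Lemma Pnz b n : coprime n.+1 #|('GL_2[F])%g| -> P b n.+1 != 0.
Proof.
move=> hc; apply/negP => /eqP h0.
have hPn : P b n = 1.
  have := cassini b n; rewrite PSS h0 => h1.
  have : (P b n + 1) ^+ 2 = 0.
    have -> : (P b n + 1) ^+ 2 = (0 ^+ 2 + P b n * (P b n + b * 0)) + 1 + (P b n + P b n) by ring.
    by rewrite h1 (two0 (P b n)) addr0 two0.
  move/eqP; rewrite expf_eq0 /= => /eqP h2.
  by move: h2; move/eqP; rewrite addr_eq0 oppF => /eqP.
have hM : (Q b 1 0) ^+ n.+1 = 1.
  by rewrite Mpow PSS h0 mulr0 addr0 hPn Q1.
pose u : {'GL_2[F]} := FinRing.unit _ (Qunit b).
have hu : (u ^+ n.+1 = 1)%g by apply: val_inj; rewrite FinRing.val_unitX /= hM.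
have d1 : (#[u]%g %| n.+1)%N by rewrite order_dvdn hu.
have d2 : (#[u]%g %| #|('GL_2[F])%g|)%N by apply: order_dvdG; rewrite inE.
have : (#[u]%g %| gcdn n.+1 #|('GL_2[F])%g|)%N by rewrite dvdn_gcd d1 d2.
rewrite (eqP hc) dvdn1 order_eq1 => /eqP hu1.
have : val u = val (1 : {'GL_2[F]})%g by rewrite hu1.
move/(congr1 (fun M : 'M[F]_2 => M 0 1)); rewrite /= !mxE /=.
by move/eqP; rewrite oner_eq0.
Qed.

Lemma split_entry (x b : F) (i j : nat) :
  x * (if i == j then b else if (i.+1 == j) || (j.+1 == i) then 1 else 0) =
  (if i == j then x else 0) * b + (if i.+1 == j then x else 0) + (if i == j.+1 then x else 0).
Proof.
have [->|hne] := eqVneq i j.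
  by rewrite ?eqxx (gtn_eqF (ltnSn j)) (ltn_eqF (ltnSn j)) !addr0.
rewrite ?(negbTE hne) mul0r add0r.
have [e|h1] := eqVneq i.+1 j.
  by rewrite -e /= mulr1 (ltn_eqF (ltn_trans (ltnSn i) (ltnSn i.+1))) addr0.
rewrite ?(negbTE h1) /= add0r.
have [e|h2] := eqVneq j.+1 i; first by rewrite mulr1.
by rewrite mulr0.
Qed.

Lemma eq_of_sum0 (a c : F) : a + c = 0 -> c = a.
Proof. by move/eqP; rewrite addr_eq0 oppF => /eqP ->. Qed.

Lemma ker_tri n b (u : 'rV[F]_n) : P b n.+1 != 0 -> u *m tridiag n b = 0 -> u = 0.
Proof.
move=> hP H.
pose U k := \sum_(i < n) (if (i:nat) == k then u 0 i else 0).
have Ui : forall i : 'I_n, U i = u 0 i.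
  move=> i; rewrite /U (bigD1 i) //= eqxx big1 ?addr0 // => j hj.
  by rewrite val_eqE (negbTE hj).
have Ubig : forall k, (n <= k)%N -> U k = 0.
  move=> k hk; rewrite /U big1 // => i _; case: eqP => // h.
  by move: (ltn_ord i); rewrite h ltnNge hk.
pose W k := if k is k'.+1 then U k' else 0.
have Eq : forall j, (j < n)%N -> W j + U j * b + U j.+1 = 0.
  move=> j hj; have := congr1 (fun M : 'rV[F]_n => M 0 (Ordinal hj)) H.
  rewrite !mxE => <-.
  under eq_bigr => i _ do rewrite mxE split_entry.
  rewrite !big_split /= -big_distrl /=.
  have -> : W j = \sum_(i<n) (if i.+1 == j then u 0 i else 0).
    by case: j hj => [|k] hk /=; [rewrite big1 | ].
  by rewrite [X in X + _ = _]addrC.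
have claim : forall k, (k < n.+1)%N -> W k = W 1 * P b k /\ W k.+1 = W 1 * P b k.+1.
  elim => [|k IH] hk; first by rewrite /= mulr0 mulr1.
  have [h1 h2] := IH (ltnW hk); split => //.
  have := Eq k hk => /eq_of_sum0 hE.
  change (U k.+1 = W 1 * P b k.+2); rewrite hE PSS -[U k]/(W k.+1) h1 h2; ring.
have hW1 : W 1 = 0.
  have [_ h] := claim n (ltnSn n).
  move: h; rewrite /= Ubig // => /esym /eqP; rewrite mulf_eq0 (negbTE hP) orbF.
  by move/eqP.
apply/rowP => i; rewrite !mxE -Ui.
have [_ h] := claim i (ltnW (ltn_ord i)).
by move: h; rewrite hW1 mul0r.
Qed.
End S.

Theorem corollary2p3 (F : finFieldType) (n : nat)
  (hq : exists k : nat, #|F| = (2 ^ k)%N)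
  (hn : (1 <= n)%N)
  (hgcd : coprime n.+1 (#|F| * (#|F| ^ 2 - 1))) :
  forall a : F, is_LCD (genC n a).
Proof.
move=> a v [m ->] hd.
have two0 : forall x : F, x + x = 0.
  have [k hk] := hq.
  have two := pcharf0 (card_finPcharP hk (isT : prime 2)).
  by move=> x; rewrite -mulr2n -mulr_natr two mulr0.
have hcop : coprime n.+1 #|('GL_2[F])%g|.
  have e : (#|F| ^ 2 - 1 = (#|F| - 1) * (#|F| + 1))%N.
    by rewrite -(subn_sqr #|F| 1) exp1n.
  move: hgcd; rewrite e !coprimeMr => /and3P [h1 h2 h3].
  rewrite card_GL_2 !coprimeMr h1 subn1 in h2 *.
  by rewrite addn1 in h3; rewrite h2 h3.
set T := tridiag n a.
have Tsym : T^T = T.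
  by apply/matrixP => i j; rewrite !mxE [j == i]eq_sym orbC.
have hw : (m *m genC n a) *m (genC n a)^T = 0.
  apply/rowP => j; rewrite [RHS]mxE.
  have := hd (row j (genC n a)) (ex_intro _ (delta_mx 0 j) (rowE j _)).
  rewrite /edot => <-; rewrite !mxE; apply: eq_bigr => i _; rewrite !mxE.
  by [].
have GG : genC n a *m (genC n a)^T = 1%:M + T *m T.
  by rewrite /genC tr_row_mx mul_row_col trmx1 mul1mx Tsym.
have SE : tridiag n (a + 1) = 1%:M + T.
  apply/matrixP => i j; rewrite !mxE.
  by case: (eqVneq i j) => [e|h]; rewrite ?mulr1n ?mulr0n ?add0r // addrC.
have TT : T + T = 0 by apply/matrixP => i j; rewrite !mxE two0.
have SS : tridiag n (a + 1) *m tridiag n (a + 1) = 1%:M + T *m T.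
  rewrite SE mulmxDl !mulmxDr !mul1mx mulmx1 addrA -[1%:M + T + T]addrA TT addr0.
  by [].
have hP := Pnz two0 (a + 1) hcop.
have h0 : (m *m tridiag n (a + 1)) *m tridiag n (a + 1) = 0.
  by rewrite -mulmxA SS -GG mulmxA hw.
have := ker_tri two0 hP (ker_tri two0 hP h0) => ->.
by rewrite mul0mx.
Qed.
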